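(* Let $a,d\in\mathbb C$ and let $n\in\mathbb C$ with $d-n\in\mathbb N$. Then the polynomial $$f(a,d,n)_x=\sum_{k=0}^{d-n}\binom{a+d+x-k}{k}\binom{d+k-x}{d-n-k}\in\mathbb C[x]$$ is constant in $x$; its value depends only on $a$, $d$ and $n$.
   Context: For $z\in\mathbb C$ (or $z$ a polynomial in $x$) and $k\in\mathbb N$, the binomial coefficient is $\binom{z}{k}=\frac{z(z-1)\cdots(z-k+1)}{k!}$. *)

(* Defs.v *)
From HB Require Import structures.
From mathcomp Require Import all_boot all_order all_algebra.
From mathcomp Require Import complex.
From mathcomp Require Import Rstruct.
From Stdlib Require Import Reals.
Set Implicit Arguments. Unset Strict Implicit. Unset Printing Implicit Defensive.
Import GRing.Theory.
Local Open Scope ring_scope.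

Notation CC := (complex Rdefinitions.R).

Definition binomp (p : {poly CC}) (k : nat) : {poly CC} :=
  (k`!%:R)^-1 *: \prod_(i < k) (p - (i%:R)%:P).

(* f(a,d,n)_x with m = d - n in N:
   sum_{k=0}^{m} binom(a+d+x-k, k) binom(d+k-x, m-k) *)
Definition fpoly (a d : CC) (m : nat) : {poly CC} :=
  \sum_(k < m.+1)
     binomp ('X + (a + d - k%:R)%:P) k * binomp ((d + k%:R)%:P - 'X) (m - k).

(* Main.v *)
Set Warnings "-all".
Require Import Defs.
From HB Require Import structures.
From mathcomp Require Import all_boot all_order all_algebra.
From mathcomp Require Import complex Rstruct.
From mathcomp Require Import ring.
Import GRing.Theory Num.Theory.
Local Open Scope ring_scope.

Definition cb (z : CC) (k : nat) : CC :=
  (k`!%:R)^-1 * \prod_(i < k) (z - i%:R).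

Lemma cb0 z : cb z 0 = 1.
Proof. by rewrite /cb big_ord0 fact0 invr1 mulr1. Qed.

Lemma fact_neq0 k : (k`!%:R : CC) != 0.
Proof. by rewrite pnatr_eq0 -lt0n fact_gt0. Qed.

Lemma pascal z k : cb (z + 1) k.+1 = cb z k.+1 + cb z k.
Proof.
rewrite /cb big_ord_recl big_ord_recr /=.
have -> : \prod_(i < k) (z + 1 - (bump 0 i)%:R) = \prod_(i < k) (z - i%:R).
  by apply: eq_bigr => i _; rewrite /bump /= add1n -natr1; ring.
set P := \prod_(i < k) (z - i%:R).
rewrite factS natrM.
have h1 : (k.+1%:R : CC) != 0 by rewrite pnatr_eq0.
have h2 := fact_neq0 k.
rewrite -natr1. rewrite -natr1 in h1.
field. by rewrite h1 h2.
Qed.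

Definition H (m : nat) (u v : CC) : CC :=
  \sum_(k < m.+1) cb (u - k%:R) k * cb (v + k%:R) (m - k).

Lemma H_shift m : forall u v, H m (u + 1) (v - 1) = H m u v.
Proof.
elim: m => [|m IH] u v.
  by rewrite /H !big_ord1 /= !cb0.
set S := \sum_(k < m.+2) cb (u - k%:R) k * cb (v - 1 + k%:R) (m.+1 - k).
have eL : H m.+1 (u + 1) (v - 1) = S + H m (u - 1) v.
  rewrite /H /S big_ord_recl [X in _ = X + _]big_ord_recl /= !cb0 !mul1r -[RHS]addrA.
  congr (_ + _); rewrite -big_split /=; apply: eq_bigr => i _.
  rewrite /bump /= add1n subSS.
  have -> : u + 1 - i.+1%:R = (u - 1 - i%:R) + 1 by rewrite -natr1; ring.
  rewrite pascal mulrDl.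
  have -> : v - 1 + i.+1%:R = v + i%:R by rewrite -natr1; ring.
  have -> : u - i.+1%:R = u - 1 - i%:R by rewrite -natr1; ring.
  done.
have eR : H m.+1 u v = S + H m u (v - 1).
  rewrite /H /S big_ord_recr [X in _ = X + _]big_ord_recr /= !subnn !cb0 !mulr1.
  rewrite -[RHS]addrA [X in _ = _ + X]addrC [RHS]addrA; congr (_ + _).
  rewrite -big_split /=; apply: eq_bigr => i _.
  rewrite subSn; last by rewrite -ltnS.
  have -> : v + i%:R = (v - 1 + i%:R) + 1 by ring.
  by rewrite pascal mulrDr.
rewrite eL eR -IH; congr (_ + H _ _ _); ring.
Qed.

Lemma fpoly_horner a d m x :
  (fpoly a d m).[x] = H m (x + a + d) (d - x).
Proof.
rewrite /fpoly horner_sum /H; apply: eq_bigr => k _.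
rewrite hornerM /binomp !hornerZ !horner_prod /cb.
congr (_ * _ * (_ * _)); apply: eq_bigr => i _;
  rewrite !(hornerD, hornerN, hornerX, hornerC); ring.
Qed.

Theorem theorem4p2 (a d n : CC) (m : nat) (hdn : d - n = m%:R) :
  exists c : CC, fpoly a d m = c%:P.
Proof.
set p := fpoly a d m.
exists p.[0].
have hn : forall j : nat, p.[j%:R] = p.[0].
  elim=> [|j IHj] //.
  rewrite -IHj /p !fpoly_horner -natr1 -[in RHS]H_shift; congr H; ring.
apply/eqP; rewrite -subr_eq0; apply/negPn/negP => hq.
set q := p - p.[0]%:P in hq.
set rs := [seq (i%:R : CC) | i <- iota 0 (size q)].
have hall : all (root q) rs.
  apply/allP => y /mapP [j _ ->].
  by rewrite /root /q hornerD hornerN hornerC hn subrr.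
have huniq : uniq rs.
  rewrite map_inj_uniq; first exact: iota_uniq.
  move=> i j /eqP. rewrite eqr_nat. by move/eqP.
have := max_poly_roots hq hall huniq.
rewrite size_map size_iota ltnn. done.
Qed.
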